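(* Let $\mathfrak{B}\in\mathfrak{L}_{m,p}$ and let $Q_\Phi$ be a QDF. If $\mathfrak{B}$ is dissipative with respect to $Q_\Phi$, then there exists a storage function for $(\mathfrak{B},Q_\Phi)$ of degree less than $\max\{\deg(Q_\Phi),\ell(\mathfrak{B})\}$.
   Context: Time axis $\mathbb{Z}_+$, $m,p\ge1$, $q=m+p$. $\mathfrak{L}_{m,p}$ is the set of behaviors $\mathfrak{B}=\{w=(u,y):\mathbb{Z}_+\to\mathbb{R}^{q}\mid \exists x:\mathbb{Z}_+\to\mathbb{R}^n,\ x(t+1)=Ax(t)+Bu(t),\ y(t)=Cx(t)+Du(t)\ \forall t\}$ for some real matrices $A,B,C,D$ of compatible sizes ($n\ge0$). The lag $\ell(\mathfrak{B})$ is the smallest $k\ge0$ with $\operatorname{rank}\mathcal{O}_k=\operatorname{rank}\mathcal{O}_{k+1}$, where $\mathcal{O}_k=\operatorname{col}(C,CA,\dots,CA^{k-1})$, for any such representation. A QDF with coefficient matrix $\Psi\in\mathbb{S}^{(M+1)q}$ ($M\ge-1$, $M=-1$ giving the zero QDF) is $Q_\Psi(w)(t)=w_{[t,t+M]}^\top\Psi w_{[t,t+M]}$, with $w_{[t,t+M]}=\operatorname{col}(w(t),\dots,w(t+M))$; its degree is the smallest $d\ge-1$ such that all $q\times q$ blocks $\Psi_{i,j}$ with $i>d$ vanish. $\nabla\Psi:=\begin{bmatrix}0_{q,q}&0\\0&\Psi\end{bmatrix}-\begin{bmatrix}\Psi&0\\0&0_{q,q}\end{bmatrix}$, so $Q_{\nabla\Psi}(w)(t)=Q_\Psi(w)(t+1)-Q_\Psi(w)(t)$.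 Inequalities ''on $\mathfrak{B}$'' hold for all $w\in\mathfrak{B}$ and all $t$. $\mathfrak{B}$ is dissipative with respect to $Q_\Phi$ if there is a QDF $Q_\Psi$ (a storage function for $(\mathfrak{B},Q_\Phi)$) with $Q_\Psi\ge0$ on $\mathfrak{B}$ and $Q_{\nabla\Psi}\le Q_\Phi$ on $\mathfrak{B}$. *)

(* Defs.v *)
From HB Require Import structures.
From mathcomp Require Import all_boot all_order all_algebra.
From mathcomp Require Import reals.
Set Implicit Arguments. Unset Strict Implicit. Unset Printing Implicit Defensive.
Import Order.TTheory GRing.Theory Num.Theory.
Local Open Scope ring_scope.

Section Defs.
Variable R : realType.

(** Trajectories w : Z_+ -> R^(m+p), w(t) = col(u(t), y(t)). *)
Definition traj (q : nat) := nat -> 'cV[R]_q.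

Definition behavior (m p n : nat) (A : 'M[R]_n) (B : 'M[R]_(n, m))
    (C : 'M[R]_(p, n)) (D : 'M[R]_(p, m)) : traj (m + p) -> Prop :=
  fun w => exists x : nat -> 'cV[R]_n, forall t : nat,
    x t.+1 = A *m x t + B *m usubmx (w t) /\
    dsubmx (w t) = C *m x t + D *m usubmx (w t).

Definition obsmx (p n : nat) (C : 'M[R]_(p, n)) (A : 'M[R]_n) (k : nat) :=
  \mxcol_(i < k) (C *m A ^+ i).

(** Lag: smallest k with rank O_k = rank O_(k+1) (such a k <= n always exists). *)
Definition lag (p n : nat) (C : 'M[R]_(p, n)) (A : 'M[R]_n) : nat :=
  find (fun k => \rank (obsmx C A k) == \rank (obsmx C A k.+1)) (iota 0 n.+1).

(** A QDF with N = M+1 blocks: coefficient matrix Psi in S^{N q}, block indexed. *)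
Definition qmx (q N : nat) := 'M[R]_(\sum_(i < N) q, \sum_(i < N) q).

Definition qsym (q N : nat) (Psi : qmx q N) : Prop := Psi^T = Psi.

Definition window (q N : nat) (w : traj q) (t : nat) : 'M[R]_(\sum_(i < N) q, 1) :=
  \mxcol_(i < N) w (t + i)%N.

Definition QDF (q N : nat) (Psi : qmx q N) (w : traj q) (t : nat) : R :=
  ((window N w t)^T *m Psi *m window N w t) 0 0.

(** Block (i,j) of Psi, with i,j given as naturals; zero if out of range. *)
Definition blk (q N : nat) (Psi : qmx q N) (i j : nat) : 'M[R]_(q, q) :=
  match (insub i : option 'I_N), (insub j : option 'I_N) with
  | Some i', Some j' => submxblock Psi i' j'
  | _, _ => 0
  end.

(** nabla Psi = diag(0_q, Psi) - diag(Psi, 0_q). *)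
Definition nabla (q N : nat) (Psi : qmx q N) : qmx q N.+1 :=
  \mxblock_(i < N.+1, j < N.+1)
    ((if (0 < i)%N && (0 < j)%N then blk Psi i.-1 j.-1 else 0) - blk Psi i j).

(** Degree: smallest d >= -1 such that all blocks Psi_{i,j} with i > d vanish. *)
Definition qdf_deg (q N : nat) (Psi : qmx q N) : int :=
  (find (fun d => [forall i : 'I_N, forall j : 'I_N,
            (d <= i)%N ==> (submxblock Psi i j == 0)]) (iota 0 N.+1))%:Z - 1.

Definition storage_function (q N K : nat) (Bh : traj q -> Prop)
    (Phi : qmx q N) (Psi : qmx q K) : Prop :=
  qsym Psi /\
  (forall w, Bh w -> forall t, 0 <= QDF Psi w t) /\
  (forall w, Bh w -> forall t, QDF (nabla Psi) w t <= QDF Phi w t).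

Definition dissipative (q N : nat) (Bh : traj q -> Prop) (Phi : qmx q N) : Prop :=
  exists (K : nat) (Psi : qmx q K), storage_function Bh Phi Psi.

End Defs.

(* Main.v *)
Require Import Defs.
From HB Require Import structures.
From mathcomp Require Import all_boot all_order all_algebra.
From mathcomp Require Import reals ring lra zify.
Set Implicit Arguments. Unset Strict Implicit. Unset Printing Implicit Defensive.
Import Order.TTheory GRing.Theory Num.Theory.
Local Open Scope ring_scope.

Section QF.
Variable R : realType.

Definition qf (k : nat) (Psi : 'M[R]_k) (v : 'cV[R]_k) : R := (v^T *m Psi *m v) 0 0.

Lemma qf_line k (Psi : 'M[R]_k) (a b : 'cV[R]_k) (s : R) : Psi^T = Psi ->
  qf Psi (a + s *: b) = qf Psi a + 2 * s * (a^T *m Psi *m b) 0 0 + s ^+ 2 * qf Psi b.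
Proof.
move=> hs; rewrite /qf.
have hba : (b^T *m Psi *m a) 0 0 = (a^T *m Psi *m b) 0 0.
  rewrite -[in LHS](trmxK (b^T *m Psi *m a)) mxE !trmx_mul trmxK hs mulmxA.
  by [].
rewrite !mulmxDr -!scalemxAr [(a + _)^T]linearD /= [(s *: b)^T]linearZ /=.
rewrite !mulmxDl -!scalemxAl.
rewrite !mxE; rewrite !mxE in hba; rewrite hba; ring.
Qed.

Lemma psd_ker k (Psi : 'M[R]_k) (a b : 'cV[R]_k) : Psi^T = Psi ->
  (forall s, 0 <= qf Psi (a + s *: b)) -> qf Psi b = 0 -> qf Psi (a + b) = qf Psi a.
Proof.
move=> hs hpos hb0.
set beta := (a^T *m Psi *m b) 0 0.
have hb : beta = 0.
  apply/eqP; apply/negPn/negP => hne.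
  have := hpos (- (qf Psi a + 1) / (2 * beta)).
  rewrite qf_line // hb0 mulr0 addr0.
  have -> : 2 * (- (qf Psi a + 1) / (2 * beta)) * beta = - (qf Psi a + 1).
    by field; rewrite hne.
  by rewrite opprD addrA subrr sub0r oppr_ge0 ler10.
have := qf_line a b 1 hs; rewrite scale1r => ->.
by rewrite -/beta hb hb0 !mulr0 !addr0.
Qed.

Lemma qdf_expand q N (Psi : qmx R q N) w t :
  QDF Psi w t = \sum_(i < N) \sum_(j < N)
     ((w (t + i)%N)^T *m submxblock Psi i j *m w (t + j)%N) 0 0.
Proof.
rewrite /QDF /window tr_mxcol -[Psi in X in X 0 0]submxblockK.
rewrite mul_mxrow_mxblock mul_mxrow_mxcol summxE.
rewrite exchange_big /=; apply: eq_bigr => j _.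
by rewrite mulmx_suml summxE.
Qed.


Lemma blkE q N (Psi : qmx R q N) (i j : 'I_N) : blk Psi i j = submxblock Psi i j.
Proof. by rewrite /blk !valK. Qed.

Lemma blkNl q N (Psi : qmx R q N) j : blk Psi N j = 0.
Proof. by rewrite /blk insubF ?ltnn. Qed.

Lemma blkNr q N (Psi : qmx R q N) i : blk Psi i N = 0.
Proof. by rewrite /blk; case: (insub i) => // ?; rewrite insubF ?ltnn. Qed.

Lemma termB q (a b : 'cV[R]_q) (M1 M2 : 'M[R]_q) :
  (a^T *m (M1 - M2) *m b) 0 0 = (a^T *m M1 *m b) 0 0 - (a^T *m M2 *m b) 0 0.
Proof. by rewrite mulmxBr mulmxBl !mxE. Qed.

Lemma nablaE q N (Psi : qmx R q N) w t :
  QDF (nabla Psi) w t = QDF Psi w t.+1 - QDF Psi w t.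
Proof.
rewrite qdf_expand.
rewrite (eq_bigr (fun i : 'I_N.+1 => \sum_(j < N.+1) ((w (t + i)%N)^T *m
   (if (0 < i)%N && (0 < j)%N then blk Psi i.-1 j.-1 else 0) *m w (t + j)%N) 0 0 -
   \sum_(j < N.+1) ((w (t + i)%N)^T *m blk Psi i j *m w (t + j)%N) 0 0)); last first.
  by move=> i _; rewrite -sumrB; apply: eq_bigr => j _; rewrite /nabla mxblockK termB.
rewrite sumrB; congr (_ - _).
  rewrite big_ord_recl /= big1 ?add0r; last by move=> j _; rewrite mulmx0 mul0mx mxE.
  rewrite qdf_expand; apply: eq_bigr => i _.
  rewrite big_ord_recl /= mulmx0 mul0mx mxE add0r; apply: eq_bigr => j _.
  by rewrite /= blkE !addSnnS.
rewrite big_ord_recr /= [X in _ + X]big1 ?addr0; last by move=> j _; rewrite blkNl mulmx0 mul0mx mxE.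
rewrite qdf_expand; apply: eq_bigr => i _.
rewrite big_ord_recr /= blkNr mulmx0 mul0mx mxE addr0; apply: eq_bigr => j _.
by rewrite blkE.
Qed.

Lemma qdf_zero q N (Phi : qmx R q N) d0 w t :
  (forall i j : 'I_N, (d0 <= i)%N -> submxblock Phi i j = 0) ->
  (forall i, (i < d0)%N -> w (t + i)%N = 0) -> QDF Phi w t = 0.
Proof.
move=> hP hw; rewrite qdf_expand big1 // => i _; rewrite big1 // => j _.
case: (leqP d0 i) => h; first by rewrite hP // mulmx0 mul0mx mxE.
by rewrite hw // trmx0 !mul0mx mxE.
Qed.

Definition degP q N (Psi : qmx R q N) := (fun d => [forall i : 'I_N, forall j : 'I_N,
            (d <= i)%N ==> (submxblock Psi i j == 0)]).

Lemma degP_N q N (Psi : qmx R q N) : degP Psi N.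
Proof. by apply/forallP => i; apply/forallP => j; rewrite leqNgt ltn_ord. Qed.

Lemma deg_find q N (Psi : qmx R q N) :
  let d0 := find (degP Psi) (iota 0 N.+1) in
  [/\ (d0 <= N)%N, qdf_deg Psi = d0%:Z - 1 &
   forall i j : 'I_N, (d0 <= i)%N -> submxblock Psi i j = 0].
Proof.
move=> d0.
have hhas : has (degP Psi) (iota 0 N.+1).
  by apply/hasP; exists N; [rewrite mem_iota add0n ltnSn | exact: degP_N].
have hl : (d0 < N.+1)%N by rewrite -(size_iota 0 N.+1) -has_find.
split => //.
have := nth_find 0 hhas; rewrite -/d0 nth_iota // add0n => /forallP h i j hi.
by have /forallP /(_ j) /implyP /(_ hi) /eqP := h i.
Qed.

End QF.

Section Win.
Variable R : realType.
Lemma window_ext q N (w w' : traj R q) t t' :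
  (forall i, (i < N)%N -> w (t + i)%N = w' (t' + i)%N) -> window N w t = window N w' t'.
Proof. by move=> h; apply: eq_mxcol => i; apply: h. Qed.

Lemma window_lin q N (w1 w2 : traj R q) a t :
  window N (fun k => a *: w1 k + w2 k) t = a *: window N w1 t + window N w2 t.
Proof. by apply/matrixP => i j; rewrite !mxE. Qed.

Lemma window0 q N (w : traj R q) t : (forall i, (i < N)%N -> w (t + i)%N = 0) ->
  window N w t = 0.
Proof. by move=> h; apply/matrixP => i j; rewrite !mxE h ?mxE. Qed.
End Win.

Section Sys.
Variables (R : realType) (m p n : nat) (A : 'M[R]_n) (B : 'M[R]_(n, m))
  (C : 'M[R]_(p, n)) (D : 'M[R]_(p, m)).

Fixpoint xs (x0 : 'cV[R]_n) (U : nat -> 'cV[R]_m) (t : nat) : 'cV[R]_n :=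
  match t with 0 => x0 | t'.+1 => A *m xs x0 U t' + B *m U t' end.

Definition tw x0 U : traj R (m + p) := fun t => col_mx (U t) (C *m xs x0 U t + D *m U t).

Lemma tw_beh x0 U : behavior A B C D (tw x0 U).
Proof. by exists (xs x0 U) => t; rewrite /tw col_mxKu col_mxKd. Qed.

Lemma xs_lin a x1 x2 U1 U2 t :
  xs (a *: x1 + x2) (fun i => a *: U1 i + U2 i) t = a *: xs x1 U1 t + xs x2 U2 t.
Proof.
elim: t => [|t IH] //=; rewrite IH !mulmxDr -!scalemxAr scalerDr.
by rewrite -!addrA; congr (_ + _); rewrite addrCA !addrA.
Qed.

Lemma tw_lin a x1 x2 U1 U2 t :
  tw (a *: x1 + x2) (fun i => a *: U1 i + U2 i) t = a *: tw x1 U1 t + tw x2 U2 t.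
Proof.
rewrite /tw xs_lin scale_col_mx add_col_mx; congr col_mx.
rewrite !mulmxDr -!scalemxAr scalerDr -!addrA; congr (_ + _).
by rewrite addrCA !addrA.
Qed.

Lemma xs_shift x0 U t i :
  xs x0 U (t + i) = xs (xs x0 U t) (fun k => U (t + k)%N) i.
Proof. by elim: i => [|i IH]; rewrite ?addn0 // addnS /= IH. Qed.

Lemma tw_shift x0 U t i :
  tw x0 U (t + i) = tw (xs x0 U t) (fun k => U (t + k)%N) i.
Proof. by rewrite /tw xs_shift. Qed.

Lemma xs_ext x0 U U' t : (forall i, (i < t)%N -> U i = U' i) ->
  xs x0 U t = xs x0 U' t.
Proof.
elim: t => [|t IH] h //=; rewrite IH ?h // => i hi; apply: h; exact: ltnW.
Qed.

Lemma tw_ext x0 U U' t : (forall i, (i <= t)%N -> U i = U' i) ->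
  tw x0 U t = tw x0 U' t.
Proof. by move=> h; rewrite /tw (@xs_ext x0 U U') ?h // => i /ltnW /h. Qed.

Lemma xs_zero x0 U t : (forall i, (i < t)%N -> U i = 0) ->
  xs x0 U t = A ^+ t *m x0.
Proof.
elim: t => [|t IH] h /=; first by rewrite expr0 mul1mx.
rewrite IH ?h // ?mulmx0 ?addr0 ?exprS ?mulmxA // => i hi; apply: h; exact: ltnW.
Qed.

Lemma beh_tw w : behavior A B C D w -> exists x : nat -> 'cV[R]_n,
  forall t i, w (t + i)%N = tw (x t) (fun k => usubmx (w (t + k)%N)) i.
Proof.
case=> x hx; exists x => t i.
have hxs : x (t + i)%N = xs (x t) (fun k => usubmx (w (t + k)%N)) i.
  by elim: i => [|i IH] /=; rewrite ?addn0 // addnS (proj1 (hx _)) IH.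
rewrite /tw -hxs -(proj2 (hx _)); exact: (esym (vsubmxK _)).
Qed.

End Sys.

Section Lag.
Variables (R : realType) (p n : nat) (C : 'M[R]_(p, n)) (A : 'M[R]_n).

Lemma exprSmx k : A ^+ k.+1 = A ^+ k *m A.
Proof. by rewrite exprSr. Qed.

Lemma obs_eqmx k : (obsmx C A k :=: \sum_(i < k) <<C *m A ^+ i>>)%MS.
Proof. exact: eqmx_col. Qed.

Lemma obs_sub k : (obsmx C A k <= obsmx C A k.+1)%MS.
Proof.
rewrite (obs_eqmx k) (obs_eqmx k.+1).
apply/sumsmx_subP => i _.
by rewrite (sumsmx_sup (widen_ord (leqnSn k) i)) //.
Qed.

Lemma obs_last k : (C *m A ^+ k <= obsmx C A k.+1)%MS.
Proof.
rewrite (obs_eqmx k.+1).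
by rewrite (sumsmx_sup (@ord_max k)) // genmxE.
Qed.

Lemma obs_stab k : \rank (obsmx C A k) = \rank (obsmx C A k.+1) ->
  (C *m A ^+ k <= obsmx C A k)%MS.
Proof.
move=> hr; have := (mxrank_leqif_eq (obs_sub k)).2; rewrite hr eqxx.
move=> /esym /andP [_ h]; exact: submx_trans (obs_last k) h.
Qed.

Lemma obs_mul k (d : 'cV[R]_n) : obsmx C A k *m d = \mxcol_(i < k) (C *m A ^+ i *m d).
Proof. by rewrite /obsmx mxcol_mul. Qed.

Lemma lag_prop : (lag C A <= n)%N /\
  \rank (obsmx C A (lag C A)) = \rank (obsmx C A (lag C A).+1).
Proof.
set P := (fun k => \rank (obsmx C A k) == \rank (obsmx C A k.+1)).
have hhas : has P (iota 0 n.+1).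
  apply/negPn/negP => hn.
  have hlt : forall k, (k <= n)%N -> (\rank (obsmx C A k) < \rank (obsmx C A k.+1))%N.
    move=> k hk; rewrite ltn_neqAle mxrankS ?obs_sub // andbT.
    apply/negP => hk2; apply: (negP hn); apply/hasP; exists k => //.
    by rewrite mem_iota add0n ltnS hk.
  have hge : forall k, (k <= n.+1)%N -> (k <= \rank (obsmx C A k))%N.
    elim => [|k IH] hk //; apply: leq_ltn_trans (hlt k _); first by apply: IH; exact: ltnW.
    by [].
  have := hge n.+1 (leqnn _); rewrite leqNgt ltnS rank_leq_col //.
have := nth_find 0 hhas; have := hhas; rewrite has_find size_iota => hl.
rewrite nth_iota // add0n => /eqP h; split => //.
Qed.

Lemma lag_stab L (d : 'cV[R]_n) : (lag C A <= L)%N ->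
  (forall i, (i < L)%N -> C *m A ^+ i *m d = 0) -> forall j, C *m A ^+ j *m d = 0.
Proof.
move=> hL hd; set k := lag C A.
have [_ hr] := lag_prop; have /submxP [X hX] := obs_stab hr.
pose Pk (e : 'cV[R]_n) := forall i, (i < k)%N -> C *m A ^+ i *m e = 0.
have F1 : forall e, Pk e -> C *m A ^+ k *m e = 0.
  move=> e he; rewrite hX -mulmxA obs_mul.
  have -> : \mxcol_(i < k) (C *m A ^+ i *m e) = 0.
    by rewrite -(mxcol0 (p_ := fun=> p)); apply: eq_mxcol => i; rewrite he.
  by rewrite mulmx0.
have F2 : forall e, Pk e -> Pk (A *m e).
  move=> e he i hi; rewrite mulmxA -(mulmxA C) -exprSmx.
  case: (ltngtP i.+1 k) => h; [exact: he | by move: h; rewrite ltnNge hi | ].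
  by rewrite h F1.
have hP : Pk d by move=> i hi; apply: hd; exact: leq_trans hi hL.
move=> j; elim: j d hP {hd} => [|j IH] e he.
  case: (posnP k) => hk; last by apply: he.
  by have := F1 e he; rewrite hk.
by rewrite exprSmx (mulmxA C) -(mulmxA _ A) IH //; apply: F2.
Qed.

End Lag.

Section Lin.
Variable R : realType.

Lemma mx_of_lin a b (h : 'cV[R]_a -> 'cV[R]_b) :
  (forall c x y, h (c *: x + y) = c *: h x + h y) ->
  exists M : 'M[R]_(b, a), forall v, h v = M *m v.
Proof.
move=> hl.
have h0 : h 0 = 0.
  by have := hl 1 0 0; rewrite scaler0 addr0 scale1r => /(congr1 (fun z => z - h 0)); rewrite subrr addrK.
have hadd : {morph h : x y / x + y}.
  by move=> x y; rewrite -[x in LHS]scale1r hl scale1r.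
have hZ : forall c x, h (c *: x) = c *: h x.
  by move=> c x; rewrite -[c *: x]addr0 hl h0 addr0.
exists (\matrix_(i, j) h (delta_mx j 0) i 0) => v.
rewrite {1}(matrix_sum_delta v) (big_morph h hadd h0).
apply/matrixP => i k; rewrite (ord1 k) !mxE summxE.
apply: eq_bigr => j _; rewrite big_ord1 hZ !mxE mulrC.
by rewrite (ord1 (@ord0 0)).
Qed.

Lemma mxcol_lin L pp (X Y : 'I_L -> 'cV[R]_pp) c :
  \mxcol_(i < L) (c *: X i + Y i) = c *: \mxcol_(i < L) X i + \mxcol_(i < L) Y i.
Proof. by apply/matrixP => i j; rewrite !mxE. Qed.

End Lin.

Section Key.
Variables (R : realType) (m p n : nat) (A : 'M[R]_n) (B : 'M[R]_(n, m))
  (C : 'M[R]_(p, n)) (D : 'M[R]_(p, m)).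
Variables (N : nat) (Phi : qmx R (m + p) N) (K : nat) (Psi : qmx R (m + p) K).
Hypothesis hsym : Psi^T = Psi.
Hypothesis hpos : forall w, behavior A B C D w -> forall t, 0 <= QDF Psi w t.
Hypothesis hdiss : forall w, behavior A B C D w -> forall t,
  QDF (nabla Psi) w t <= QDF Phi w t.
Variables (d0 L : nat).
Hypothesis hPhi0 : forall i j : 'I_N, (d0 <= i)%N -> submxblock Phi i j = 0.
Hypothesis hL1 : (d0 <= L.+1)%N.
Hypothesis hL2 : (lag C A <= L)%N.

Let twf := tw A B C D.
Let xsf := xs A B.

Definition ff x0 U := QDF Psi (twf x0 U) 0.

Lemma ff_pos x0 U : 0 <= ff x0 U.
Proof. exact: hpos (tw_beh _ _ _ _ _ _) 0. Qed.

Lemma ff_ext x0 U U' : (forall i, (i < K)%N -> U i = U' i) -> ff x0 U = ff x0 U'.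
Proof.
move=> h; rewrite /ff /QDF (@window_ext _ _ K (twf x0 U) (twf x0 U') 0 0) //.
move=> i hi; rewrite add0n; apply: tw_ext => k hk; apply: h; exact: leq_ltn_trans hk hi.
Qed.

Lemma ff_ker x0 U dx dU : ff dx dU = 0 ->
  ff (x0 + dx) (fun i => U i + dU i) = ff x0 U.
Proof.
move=> h0.
have hw : forall s : R, window K (twf (x0 + s *: dx) (fun i => U i + s *: dU i)) 0
     = window K (twf x0 U) 0 + s *: window K (twf dx dU) 0.
  move=> s; rewrite [RHS]addrC -window_lin; apply: window_ext => i _.
  rewrite -tw_lin addrC; apply: tw_ext => k _; by rewrite addrC.
have e1 : window K (twf (x0 + dx) (fun i => U i + dU i)) 0 =
    window K (twf x0 U) 0 + window K (twf dx dU) 0.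
  have := hw 1; rewrite !scale1r => <-.
  by apply: window_ext => i _; apply: tw_ext => k _; rewrite scale1r.
change (qf Psi (window K (twf (x0 + dx) (fun i => U i + dU i)) 0) =
  qf Psi (window K (twf x0 U) 0)).
rewrite e1; apply: psd_ker => //.
by move=> s; rewrite -hw; exact: (hpos (tw_beh _ _ _ _ _ _) 0).
Qed.


Definition ej (j : nat) (a : 'cV[R]_m) : nat -> 'cV[R]_m :=
  fun i => if i == j then a else 0.

Lemma tw_ej0 j a i : (i < j)%N -> twf 0 (ej j a) i = 0.
Proof.
move=> hi; rewrite /twf /tw xs_zero ?mulmx0 /ej.
  by rewrite (ltn_eqF hi) mulmx0 addr0 col_mx0.
by move=> k hk; rewrite (ltn_eqF (ltn_trans hk hi)).
Qed.

Lemma ff_ej j a : (L <= j)%N -> ff 0 (ej j a) = 0.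
Proof.
suff H : forall k j a, (K <= j + k)%N -> (L <= j)%N -> ff 0 (ej j a) <= 0.
  by move=> hj; apply/eqP; rewrite eq_le ff_pos andbT (H K) // leq_addl.
elim=> [|k IH] {}j {}a hK hj.
  rewrite addn0 in hK.
  rewrite /ff /QDF window0 ?trmx0 ?mul0mx ?mxE // => i hi.
  by rewrite add0n tw_ej0 //; exact: leq_trans hi hK.
set w := twf 0 (ej j.+1 a).
have e1 : ff 0 (ej j a) = QDF Psi w 1.
  have ew : window K (twf 0 (ej j a)) 0 = window K w 1.
    apply: window_ext => i _; rewrite /w /twf (tw_shift A B C D 0 (ej j.+1 a) 1 i) add0n.
    have -> : xs A B 0 (ej j.+1 a) 1 = 0 by rewrite /= /ej mulmx0 add0r mulmx0.
    by apply: tw_ext => k' _; rewrite /ej add1n eqSS.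
  by rewrite /ff /QDF ew.
have hw : behavior A B C D w by exact: tw_beh.
have := hdiss hw 0; rewrite nablaE (@qdf_zero _ _ _ Phi d0) //; last first.
  by move=> i hi; rewrite add0n /w tw_ej0 //; exact: leq_trans hi (leq_trans hL1 _).
rewrite subr_le0 -e1 => h; apply: le_trans h _.
by apply: IH => //; [rewrite addSnnS | exact: leq_trans hj _].
Qed.

Lemma xs_diff x0 x0' U U' i : (forall k, (k < i)%N -> U k = U' k) ->
  xs A B x0 U i = A ^+ i *m (x0 - x0') + xs A B x0' U' i.
Proof.
elim: i => [|i IH] h /=; first by rewrite expr0 mul1mx subrK.
rewrite IH; last by move=> k hk; apply: h; exact: ltnW.
by rewrite h // mulmxDr exprS mulmxA addrA; congr (_ + _ + _).
Qed.

Lemma ff_dep x0 U x0' U' : (forall i, (i < L)%N -> twf x0 U i = twf x0' U' i) ->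
  ff x0 U = ff x0' U'.
Proof.
move=> h.
have hU : forall i, (i < L)%N -> U i = U' i.
  by move=> i hi; have := congr1 usubmx (h i hi); rewrite /twf /tw !col_mxKu.
set dl := x0 - x0'.
have hC : forall i, (i < L)%N -> C *m A ^+ i *m dl = 0.
  move=> i hi; have := congr1 dsubmx (h i hi); rewrite /twf /tw !col_mxKd.
  rewrite (@xs_diff x0 x0' U U' i); last by move=> k hk; apply: hU; exact: ltn_trans hk hi.
  rewrite hU // mulmxDr -addrA mulmxA.
  by move=> /(congr1 (fun M => M - (C *m xs A B x0' U' i + D *m U' i))); rewrite addrK subrr.
have hCall := lag_stab hL2 hC.
have stepA : ff x0 U' = ff x0' U'.
  have h0 : ff dl (fun _ => 0) = 0.
    rewrite /ff /QDF window0 ?trmx0 ?mul0mx ?mxE // => i _.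
    by rewrite /twf /tw xs_zero // mulmx0 addr0 mulmxA hCall col_mx0.
  have := ff_ker x0' U' h0; rewrite /dl addrC subrK => <-.
  by apply: ff_ext => i _; rewrite addr0.
rewrite -stepA.
pose Uk k := fun i => if (i < L + k)%N then U i else U' i.
have hk : forall k, ff x0 (Uk k) = ff x0 U'.
  elim=> [|k IH].
    by apply: ff_ext => i _; rewrite /Uk addn0; case: ifP => // /hU.
  have h0 : ff 0 (ej (L + k) (U (L + k)%N - U' (L + k)%N)) = 0 by apply: ff_ej; exact: leq_addr.
  have := ff_ker x0 (Uk k) h0; rewrite addr0 IH => <-.
  apply: ff_ext => i _; rewrite /Uk /ej addnS ltnS leq_eqVlt.
  case: (eqVneq i (L + k)%N) => [->|hne] /=; first by rewrite ltnn subrKC.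
  by rewrite addr0.
rewrite -(hk K); apply: ff_ext => i hi; rewrite /Uk.
by rewrite (leq_trans hi (leq_addl _ _)).
Qed.

Definition vb (v : 'cV[R]_(\sum_(i < L) (m + p))) (j : nat) : 'cV[R]_(m + p) :=
  match (insub j : option 'I_L) with
  | Some i => submxcol (p_ := fun=> (m + p)%N) v i
  | None => 0 end.

Definition Uv v (j : nat) : 'cV[R]_m := usubmx (vb v j).

Definition Tv v : 'cV[R]_(\sum_(i < L) p) :=
  \mxcol_(i < L) (dsubmx (vb v i) - (C *m xs A B 0 (Uv v) i + D *m Uv v i)).

Definition Om := obsmx C A L.

Definition xh v : 'cV[R]_n := ((Tv v)^T *m pinvmx (Om^T))^T.

Definition hfun v := window K (twf (xh v) (Uv v)) 0.

Lemma vb_lin c v1 v2 j : vb (c *: v1 + v2) j = c *: vb v1 j + vb v2 j.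
Proof.
rewrite /vb; case: (insub j) => [i|]; last by rewrite scaler0 addr0.
by apply/matrixP => x y; rewrite !mxE.
Qed.

Lemma Uv_lin c v1 v2 j : Uv (c *: v1 + v2) j = c *: Uv v1 j + Uv v2 j.
Proof. by rewrite /Uv vb_lin linearD /= linearZ. Qed.

Lemma xs0_lin c v1 v2 i :
  xs A B 0 (Uv (c *: v1 + v2)) i = c *: xs A B 0 (Uv v1) i + xs A B 0 (Uv v2) i.
Proof.
rewrite -xs_lin scaler0 addr0; apply: xs_ext => k _; exact: Uv_lin.
Qed.

Lemma Tv_lin c v1 v2 : Tv (c *: v1 + v2) = c *: Tv v1 + Tv v2.
Proof.
rewrite /Tv -mxcol_lin; apply: eq_mxcol => i.
rewrite vb_lin xs0_lin Uv_lin linearD /= linearZ /=.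
rewrite !mulmxDr -!scalemxAr.
by apply/matrixP => x y; rewrite !mxE; ring.
Qed.

Lemma xh_lin c v1 v2 : xh (c *: v1 + v2) = c *: xh v1 + xh v2.
Proof.
rewrite /xh Tv_lin [(c *: _ + _)^T]linearD /= [(c *: _)^T]linearZ /=.
by rewrite mulmxDl -scalemxAl linearD /= linearZ.
Qed.

Lemma hfun_lin c v1 v2 : hfun (c *: v1 + v2) = c *: hfun v1 + hfun v2.
Proof.
rewrite /hfun -window_lin; apply: window_ext => i _.
rewrite /twf -tw_lin xh_lin; apply: tw_ext => k _; exact: Uv_lin.
Qed.

Lemma vb_win w t i : (i < L)%N -> vb (window L w t) i = w (t + i)%N.
Proof.
move=> hi; rewrite /vb (insubT (fun k => k < L)%N hi) /window.
by rewrite mxcolK.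
Qed.

Lemma hfun_ok w t : behavior A B C D w ->
  ff (xh (window L w t)) (Uv (window L w t)) = QDF Psi w t.
Proof.
move=> hw; have [x hx] := beh_tw hw.
set W := window L w t.
set u' := fun k => usubmx (w (t + k)%N).
have -> : QDF Psi w t = ff (x t) u'.
  by rewrite /ff /QDF (@window_ext _ _ K w (twf (x t) u') t 0).
have hU : forall k, (k < L)%N -> Uv W k = u' k.
  by move=> k hk; rewrite /Uv /W vb_win.
have hxs : forall i, (i < L)%N -> xs A B 0 (Uv W) i = xs A B 0 u' i.
  move=> i hi; apply: xs_ext => k hk; apply: hU; exact: ltn_trans hk hi.
have hT : Tv W = Om *m x t.
  rewrite /Om obs_mul /Tv; apply: eq_mxcol => i.
  rewrite /W vb_win // hx /twf /tw col_mxKd hxs // hU //.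
  rewrite (@xs_diff (x t) 0 u' u') // subr0 mulmxDr mulmxA.
  have -> : usubmx (w (t + i)%N) = u' i by [].
  by rewrite -(addrA (C *m A ^+ i *m x t)) addrK.
have hO : Om *m xh W = Om *m x t.
  have hs : ((Tv W)^T <= Om^T)%MS by rewrite hT trmx_mul submxMl.
  have e := mulmxKpV hs.
  by rewrite /xh -{1}[Om]trmxK -trmx_mul e trmxK hT.
have hCA : forall i, (i < L)%N -> C *m A ^+ i *m xh W = C *m A ^+ i *m x t.
  move=> i hi; move: hO; rewrite /Om !obs_mul => /eq_mxcolP /(_ (Ordinal hi)).
  by [].
apply: ff_dep => i hi; rewrite /twf /tw hU //; congr col_mx.
rewrite (@xs_diff (xh W) 0 (Uv W) (Uv W)) // (@xs_diff (x t) 0 u' (Uv W)); last first.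
  by move=> k hk; rewrite hU //; exact: ltn_trans hk hi.
by rewrite !subr0 !mulmxDr !mulmxA hCA.
Qed.

Lemma exists_Psi' : exists Psi' : qmx R (m + p) L,
  storage_function (behavior A B C D) Phi Psi' /\ qdf_deg Psi' <= L%:Z - 1.
Proof.
have [M hM] := mx_of_lin hfun_lin.
exists (M^T *m Psi *m M).
have hQ : forall w t, behavior A B C D w -> QDF (M^T *m Psi *m M) w t = QDF Psi w t.
  move=> w t hw; rewrite -hfun_ok //.
  have -> : ff (xh (window L w t)) (Uv (window L w t)) =
    ((hfun (window L w t))^T *m Psi *m hfun (window L w t)) 0 0 by [].
  by rewrite hM /QDF trmx_mul !mulmxA.
split; [split; [|split] |].
- by rewrite /qsym !trmx_mul trmxK hsym mulmxA.
- by move=> w hw t; rewrite hQ //; apply: hpos.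
- by move=> w hw t; rewrite nablaE !hQ // -nablaE; apply: hdiss.
- have [hd -> _] := deg_find (M^T *m Psi *m M).
  by rewrite lerD2r lez_nat.
Qed.

End Key.

Theorem theorem1 (R : realType) (m p n : nat) (hm : (1 <= m)%N) (hp : (1 <= p)%N)
    (A : 'M[R]_n) (B : 'M[R]_(n, m)) (C : 'M[R]_(p, n)) (D : 'M[R]_(p, m))
    (N : nat) (Phi : qmx R (m + p) N) (hPhi : qsym Phi) :
  dissipative (behavior A B C D) Phi ->
  exists (K : nat) (Psi : qmx R (m + p) K),
    storage_function (behavior A B C D) Phi Psi /\
    qdf_deg Psi < Num.max (qdf_deg Phi) (lag C A)%:Z.
Proof.
move=> [K [Psi [hsym [hpos hdiss]]]].
have [hd0 hdeg hPhi0] := deg_find Phi.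
set d0 := find _ _ in hd0 hdeg hPhi0.
set L := maxn d0.-1 (lag C A).
have hL1 : (d0 <= L.+1)%N.
  by apply: leq_trans (leqSpred d0) _; rewrite ltnS leq_maxl.
have hL2 : (lag C A <= L)%N by rewrite leq_maxr.
have [Psi' [hst hdeg']] := exists_Psi' hsym hpos hdiss hPhi0 hL1 hL2.
exists L, Psi'; split => //.
rewrite hdeg; apply: le_lt_trans hdeg' _.
rewrite /L; case: (leqP d0.-1 (lag C A)) => h.
  by rewrite lt_max; apply/orP; right; lia.
have hd : (0 < d0)%N by case: (d0) h.
by rewrite lt_max; apply/orP; left; rewrite -(prednK hd) /=; lia.
Qed.
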